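(* (Non-overlap scenario.) Let $\mathbf p^*\in\mathbf\Omega$ be a limiting point of the distributed projected gradient iteration with $\mathbf p^*\in\mathrm{int}\,\mathbf\Omega$ (so that $\frac{\partial J}{\partial p_i}(\mathbf p^* )=0$ for all $i$). If at $\mathbf p^*$ no two satellites have overlapping coverage regions, then $\mathbf p^*$ is a local minimum of $J$.
   Context: Coverage model. Fix an integer $n\ge 3$ and constants $r_s>0$, $\omega>0$, $T_s=2\pi/\omega$, $0<p^{\mathrm m}<r_s$. Satellites are indexed by $\mathcal N=\{1,\dots,n\}$, indices taken cyclically modulo $n$. Satellite $i$ has an initial angle $\phi_i^0$ (with $0=\phi_1^0<\phi_2^0<\dots<\phi_n^0<2\pi$), a coverage angle $\alpha_i\in(0,\pi)$, a maximum coverage intensity $\psi_i^{\mathrm m}>0$, and slope $k_i=\psi_i^{\mathrm m}/\alpha_i$. The strategy (relative position) of satellite $i$ is $p_i=(p_{ix},p_{iy})\in\Omega_i:=\{p\in\mathbb R^2:\ \|p\|_2\le p^{\mathrm m},\ (p_x+r_s)^2+p_y^2=r_s^2\}$, a closed circular arc; $\mathrm{bd}\,\Omega_i$ denotes its two endpoints and $\mathrm{int}\,\Omega_i$ the rest of the arc. Write $\mathbf p=(p_1,\dots,p_n)\in\mathbf\Omega=\prod_i\Omega_i$. Deviation angle: $\Delta\phi_i(p_i)=\operatorname{sgn}(p_{iy})\arccos\big((p_{ix}+r_s)/\sqrt{(p_{ix}+r_s)^2+p_{iy}^2}\big)$. Configuration angle at time $\tau$: $\phi_i(p_i,\tau)=\phi_i^0+\Delta\phi_i(p_i)+\omega\tau$.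 Coverage regions (angles in $\theta$, understood modulo $2\pi$): $C_i^+=(\phi_i,\phi_i+\alpha_i)$, $C_i^-=(\phi_i-\alpha_i,\phi_i)$, $C_i=C_i^+\cup C_i^-\cup\{\phi_i\}$. Local coverage intensity: $\psi_i(p_i,\theta,\tau)=\psi_i^{\mathrm m}-k_i(\theta-\phi_i)$ for $\theta\in C_i^+\cup\{\phi_i\}$, $\psi_i^{\mathrm m}+k_i(\theta-\phi_i)$ for $\theta\in C_i^-$, and $0$ otherwise (with $\theta$ shifted by a multiple of $2\pi$ so that $\theta-\phi_i\in(-\pi,\pi]$). Demand: $\mu:\mathbb R\to[0,\infty)$ continuous and $2\pi$-periodic. Global intensity $\rho(\mathbf p,\theta,\tau)=\sum_{i=1}^n\psi_i(p_i,\theta,\tau)$. Potential (accumulated average coverage cost): $J(\mathbf p)=\frac{1}{2T_s}\int_0^{T_s}\int_{\omega\tau}^{\omega\tau+2\pi}(\rho(\mathbf p,\theta,\tau)-\mu(\theta))^2\,\mathrm d\theta\,\mathrm d\tau$. The distributed projected gradient iteration is $p_i^{(k+1)}=\operatorname{proj}_{\Omega_i}\big(p_i^{(k)}-s^{(k)}\frac{\partial J}{\partial p_i}(\mathbf p^{(k)})\big)$ for all $i$. *)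

(* Defs.v *)
From Stdlib Require Import Reals Lra List.
From Coquelicot Require Import Coquelicot.
Open Scope R_scope.

(* A strategy p_i = (p_ix, p_iy) is a point of R^2; a profile is a function
   nat -> R*R of which only the indices 0..n-1 matter (satellite i+1 of the
   paper is index i here). *)

Definition sgn (y : R) : R :=
  if Rlt_dec 0 y then 1 else if Rlt_dec y 0 then -1 else 0.

Definition norm2 (p : R * R) : R := sqrt (fst p ^ 2 + snd p ^ 2).

(* Omega_i (the same set for every i) *)
Definition in_Omega (rs pm : R) (p : R * R) : Prop :=
  norm2 p <= pm /\ (fst p + rs) ^ 2 + snd p ^ 2 = rs ^ 2.
(* bd Omega_i : the two endpoints of the arc, i.e. the points with norm = pm *)
Definition in_bd_Omega (rs pm : R) (p : R * R) : Prop :=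
  in_Omega rs pm p /\ norm2 p = pm.
(* int Omega_i : the rest of the arc *)
Definition in_int_Omega (rs pm : R) (p : R * R) : Prop :=
  in_Omega rs pm p /\ ~ in_bd_Omega rs pm p.

Definition dphi (rs : R) (p : R * R) : R :=
  sgn (snd p) * acos ((fst p + rs) / sqrt ((fst p + rs) ^ 2 + snd p ^ 2)).

Definition phi (rs om : R) (phi0 : R) (p : R * R) (tau : R) : R :=
  phi0 + dphi rs p + om * tau.

(* representative of x modulo 2*PI in (-PI, PI] *)
Definition wrap (x : R) : R :=
  x + 2 * PI * IZR (Int_part ((PI - x) / (2 * PI))).

Definition in_Cplus (a ph th : R) : Prop := 0 < wrap (th - ph) < a.
Definition in_Cminus (a ph th : R) : Prop := - a < wrap (th - ph) < 0.
Definition in_C (a ph th : R) : Prop :=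
  in_Cplus a ph th \/ in_Cminus a ph th \/ wrap (th - ph) = 0.

(* local coverage intensity, with k = psim / a *)
Definition psi_loc (a psim ph th : R) : R :=
  let d := wrap (th - ph) in
  if Rle_dec 0 d then (if Rlt_dec d a then psim - (psim / a) * d else 0)
  else (if Rlt_dec (- a) d then psim + (psim / a) * d else 0).

Fixpoint sum_upto (n : nat) (f : nat -> R) : R :=
  match n with O => 0 | S m => sum_upto m f + f m end.

Definition rho (n : nat) (rs om : R) (phi0 alpha psim : nat -> R)
  (p : nat -> R * R) (th tau : R) : R :=
  sum_upto n (fun i => psi_loc (alpha i) (psim i)
                         (phi rs om (phi0 i) (p i) tau) th).

Definition Jpot (n : nat) (rs om : R) (phi0 alpha psim : nat -> R)
  (mu : R -> R) (p : nat -> R * R) : R :=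
  let Ts := 2 * PI / om in
  / (2 * Ts) *
  RInt (fun tau =>
          RInt (fun th => (rho n rs om phi0 alpha psim p th tau - mu th) ^ 2)
               (om * tau) (om * tau + 2 * PI)) 0 Ts.

Definition upd (p : nat -> R * R) (i : nat) (v : R * R) : nat -> R * R :=
  fun j => if Nat.eqb j i then v else p j.

Definition dJ_x (F : (nat -> R * R) -> R) (p : nat -> R * R) (i : nat) : R :=
  Derive (fun t => F (upd p i (t, snd (p i)))) (fst (p i)).
Definition dJ_y (F : (nat -> R * R) -> R) (p : nat -> R * R) (i : nat) : R :=
  Derive (fun t => F (upd p i (fst (p i), t))) (snd (p i)).

Definition is_proj_Omega (rs pm : R) (z w : R * R) : Prop :=
  in_Omega rs pm w /\
  forall v, in_Omega rs pm v ->
    norm2 (fst z - fst w, snd z - snd w) <= norm2 (fst z - fst v, snd z - snd v).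

(* Main.v *)
Require Import Defs.
From Stdlib Require Import Reals.
From Coquelicot Require Import Coquelicot.
Open Scope R_scope.
From Stdlib Require Import Lra Lia Psatz ZArith.

Lemma wrap_eq x : wrap x = x + 2 * PI * IZR (Int_part ((PI - x) / (2 * PI))).
Proof. reflexivity. Qed.

Lemma wrap_bounds x : - PI < wrap x <= PI.
Proof.
  rewrite wrap_eq. pose proof PI_RGT_0 as HP.
  destruct (base_Int_part ((PI - x) / (2 * PI))) as [H1 H2].
  set (y := (PI - x) / (2 * PI)) in *. set (k := IZR (Int_part y)) in *.
  assert (E : y * (2 * PI) = PI - x) by (unfold y; field; lra).
  assert (k * (2 * PI) <= y * (2*PI)) by (apply Rmult_le_compat_r; lra).
  assert ((y - 1) * (2 * PI) < k * (2*PI)) by (apply Rmult_lt_compat_r; lra).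
  split; nra.
Qed.

Definition Dw (x : R) : R := Rabs (wrap x).
Definition kw (x : R) : Z := Int_part ((PI - x) / (2 * PI)).

Lemma Dw_min x (z : Z) : Dw x <= Rabs (x + 2 * PI * IZR z).
Proof.
  unfold Dw. pose proof (wrap_bounds x) as [B1 B2]. pose proof PI_RGT_0 as HP.
  assert (Ew : x + 2 * PI * IZR z = wrap x + 2 * PI * IZR (z - kw x)).
  { rewrite minus_IZR, wrap_eq. unfold kw. ring. }
  rewrite Ew. destruct (Z.eq_dec (z - kw x) 0) as [E|E].
  - rewrite E. simpl. rewrite Rmult_0_r, Rplus_0_r. lra.
  - destruct (Z_lt_le_dec (z - kw x) 0) as [L|L].
    + assert (IZR (z - kw x) <= -1) by (apply IZR_le; lia).
      rewrite (Rabs_left1 (_ + _)) by nra. unfold Rabs; destruct Rcase_abs; nra.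
    + assert (IZR (z - kw x) >= 1) by (apply Rle_ge, IZR_le; lia).
      rewrite (Rabs_right (_ + _)) by nra. unfold Rabs; destruct Rcase_abs; nra.
Qed.

Lemma Dw_exact x : Dw x = Rabs (x + 2 * PI * IZR (kw x)).
Proof. reflexivity. Qed.

Lemma Dw_lip x y : Dw x - Dw y <= Rabs (x - y).
Proof.
  pose proof (Dw_min x (kw y)). rewrite (Dw_exact y).
  assert (E : x + 2 * PI * IZR (kw y) = (y + 2 * PI * IZR (kw y)) + (x - y)) by ring.
  rewrite E in H.
  pose proof (Rabs_triang (y + 2 * PI * IZR (kw y)) (x - y)). lra.
Qed.

Lemma Dw_per x : Dw (x + 2 * PI) = Dw x.
Proof.
  apply Rle_antisym.
  - pose proof (Dw_min (x + 2*PI) (kw x - 1)). rewrite minus_IZR in H.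
    rewrite (Dw_exact x). replace (x + 2 * PI * IZR (kw x)) with
      (x + 2 * PI + 2 * PI * (IZR (kw x) - IZR 1)) by (simpl; ring). exact H.
  - pose proof (Dw_min x (kw (x + 2*PI) + 1)). rewrite plus_IZR in H.
    rewrite (Dw_exact (x + 2 * PI)). replace (x + 2 * PI + 2 * PI * IZR (kw (x + 2 * PI))) with
      (x + 2 * PI * (IZR (kw (x + 2 * PI)) + IZR 1)) by (simpl; ring). exact H.
Qed.

Lemma Dw_nonneg x : 0 <= Dw x.
Proof. apply Rabs_pos. Qed.

Definition G (a m x : R) : R := Rmax 0 (m - m / a * Dw x).

Lemma G_nonneg a m x : 0 <= G a m x.
Proof. apply Rmax_l. Qed.

Lemma G_le a m x : 0 < a -> 0 <= m -> G a m x <= m.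
Proof.
  intros Ha Hm. unfold G. apply Rmax_lub; [lra|].
  assert (0 <= m / a * Dw x) by (apply Rmult_le_pos; [apply Rdiv_le_0_compat|apply Dw_nonneg]; lra).
  lra.
Qed.

Lemma G_per a m x : G a m (x + 2 * PI) = G a m x.
Proof. unfold G. rewrite Dw_per. reflexivity. Qed.

Lemma G_per' a m x : G a m (x - 2 * PI) = G a m x.
Proof. rewrite <- (G_per a m (x - 2 * PI)). f_equal. ring. Qed.

Lemma G_lip a m x y : 0 < a -> 0 <= m -> Rabs (G a m x - G a m y) <= m / a * Rabs (x - y).
Proof.
  intros Ha Hm. assert (Hk : 0 <= m / a) by (apply Rdiv_le_0_compat; lra).
  pose proof (Dw_lip x y). pose proof (Dw_lip y x).
  rewrite Rabs_minus_sym in H0.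
  assert (m / a * (Dw x - Dw y) <= m / a * Rabs (x - y)) by (apply Rmult_le_compat_l; lra).
  assert (m / a * (Dw y - Dw x) <= m / a * Rabs (x - y)) by (apply Rmult_le_compat_l; lra).
  unfold G. apply Rabs_le. unfold Rmax.
  destruct (Rle_dec 0 (m - m / a * Dw x)); destruct (Rle_dec 0 (m - m / a * Dw y)); split; nra.
Qed.

Lemma psi_G a m ph th : 0 < a -> 0 < m -> psi_loc a m ph th = G a m (th - ph).
Proof.
  intros Ha Hm. unfold psi_loc, G, Dw. set (d := wrap (th - ph)).
  assert (Hk : m / a * a = m) by (field; lra).
  assert (Hk0 : 0 < m / a) by (apply Rdiv_lt_0_compat; lra).
  unfold Rmax.
  destruct (Rle_dec 0 d).
  - rewrite Rabs_right by lra. destruct (Rlt_dec d a);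
    destruct (Rle_dec 0 (m - m / a * d)); nra.
  - rewrite Rabs_left by lra. destruct (Rlt_dec (-a) d);
    destruct (Rle_dec 0 (m - m / a * - d)); nra.
Qed.

Lemma psi_inC a m ph th : psi_loc a m ph th <> 0 -> in_C a ph th.
Proof.
  unfold psi_loc, in_C, in_Cplus, in_Cminus. set (d := wrap (th - ph)).
  destruct (Rle_dec 0 d); [destruct (Rlt_dec d a)|destruct (Rlt_dec (-a) d)]; intro H;
  try (exfalso; apply H; reflexivity); lra.
Qed.
Definition Ct (f : R -> R) := forall x, continuous f x.

Lemma Ct_plus f g : Ct f -> Ct g -> Ct (fun x => f x + g x).
Proof.
  intros Hf Hg x. apply continuity_pt_filterlim.
  apply (continuity_pt_plus f g); apply continuity_pt_filterlim; [apply Hf|apply Hg].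
Qed.
Lemma Ct_minus f g : Ct f -> Ct g -> Ct (fun x => f x - g x).
Proof.
  intros Hf Hg x. apply continuity_pt_filterlim.
  apply (continuity_pt_minus f g); apply continuity_pt_filterlim; [apply Hf|apply Hg].
Qed.
Lemma Ct_mult f g : Ct f -> Ct g -> Ct (fun x => f x * g x).
Proof.
  intros Hf Hg x. apply continuity_pt_filterlim.
  apply (continuity_pt_mult f g); apply continuity_pt_filterlim; [apply Hf|apply Hg].
Qed.
Lemma Ct_const c : Ct (fun _ => c).
Proof. intro x. apply continuous_const. Qed.
Lemma Ct_id : Ct (fun x => x).
Proof. intro x. apply continuous_id. Qed.
Lemma Ct_comp f g : Ct f -> Ct g -> Ct (fun x => g (f x)).
Proof. intros Hf Hg x. apply continuous_comp; auto. Qed.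
Lemma Ct_pow f k : Ct f -> Ct (fun x => f x ^ k).
Proof.
  intros Hf. induction k. simpl. apply Ct_const.
  simpl. apply Ct_mult; auto.
Qed.
Lemma Ct_ext f g : (forall x, f x = g x) -> Ct f -> Ct g.
Proof. intros E Hf x. apply (continuous_ext f g); auto. Qed.

Lemma lip_cont f x0 L : 0 <= L -> (forall x, Rabs (f x - f x0) <= L * Rabs (x - x0)) ->
  continuous f x0.
Proof.
  intros HL H. apply continuity_pt_filterlim.
  intros eps Heps. exists (eps / (L + 1)). split.
  - apply Rdiv_lt_0_compat; lra.
  - intros x [_ Hx]. simpl in *. unfold R_dist in *.
    eapply Rle_lt_trans; [apply H|].
    assert (L * Rabs (x - x0) <= L * (eps / (L + 1))) by (apply Rmult_le_compat_l; lra).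
    assert (L * (eps / (L + 1)) < eps).
    { apply (Rmult_lt_reg_r (L + 1)); [lra|]. field_simplify; lra. }
    lra.
Qed.

Lemma Ct_lip f L : 0 <= L -> (forall x y, Rabs (f x - f y) <= L * Rabs (x - y)) -> Ct f.
Proof. intros HL H x. apply (lip_cont f x L); auto. Qed.

Lemma exR f a b : Ct f -> ex_RInt f a b.
Proof. intro H. apply (ex_RInt_continuous (V:=R_CompleteNormedModule)). intros; apply H. Qed.

Lemma RInt_per P a : Ct P -> (forall x, P (x + 2 * PI) = P x) ->
  RInt P a (a + 2 * PI) = RInt P 0 (2 * PI).
Proof.
  intros HC HP.
  assert (E1 : RInt P (2 * PI) (a + 2 * PI) = RInt P 0 a).
  { pose proof (RInt_comp_lin (V:=R_CompleteNormedModule) P 1 (2*PI) 0 a (exR _ _ _ HC)) as E.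
    replace (1 * 0 + 2 * PI) with (2 * PI) in E by ring.
    replace (1 * a + 2 * PI) with (a + 2 * PI) in E by ring.
    rewrite <- E. apply RInt_ext. intros x _. change scal with Rmult; rewrite !Rmult_1_l. rewrite HP; reflexivity. }
  pose proof (RInt_Chasles P a 0 (a + 2 * PI) (exR _ _ _ HC) (exR _ _ _ HC)) as C1.
  pose proof (RInt_Chasles P 0 (2 * PI) (a + 2 * PI) (exR _ _ _ HC) (exR _ _ _ HC)) as C2.
  pose proof (opp_RInt_swap P 0 a (exR _ _ _ HC)) as C3.
  change plus with Rplus in C1, C2. change opp with Ropp in C3.
  rewrite E1 in C2. lra.
Qed.

Lemma RInt_per_shift P a s : Ct P -> (forall x, P (x + 2 * PI) = P x) ->
  RInt (fun x => P (x - s)) a (a + 2 * PI) = RInt P 0 (2 * PI).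
Proof.
  intros HC HP.
  pose proof (RInt_comp_lin (V:=R_CompleteNormedModule) P 1 (-s) a (a + 2 * PI) (exR _ _ _ HC)) as E.
  transitivity (RInt (fun y : R => scal 1 (P (1 * y + - s))) a (a + 2 * PI)).
  { apply RInt_ext. intros x _. change scal with Rmult. rewrite Rmult_1_l. f_equal. ring. }
  etransitivity; [exact E|]. replace (1 * (a + 2 * PI) + - s) with ((1 * a + - s) + 2 * PI) by ring. apply RInt_per; auto.
Qed.

Lemma param_lip (H : R -> R -> R) a b L t0 : a <= b -> 0 <= L ->
  (forall t, ex_RInt (H t) a b) ->
  (forall t u, a <= u <= b -> Rabs (H t u - H t0 u) <= L * Rabs (t - t0)) ->
  continuous (fun t => RInt (H t) a b) t0.
Proof.
  intros Hab HL Hex Hb. apply (lip_cont _ t0 ((b - a) * L)).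
  - apply Rmult_le_pos; lra.
  - intro t. pose proof (RInt_minus (H t) (H t0) a b (Hex t) (Hex t0)) as E.
    change minus with Rminus in E. rewrite <- E.
    rewrite Rmult_assoc. apply abs_RInt_le_const; auto.
    apply (ex_RInt_minus (V := R_NormedModule)); auto.
Qed.

Lemma sum_ext n f g : (forall i, (i < n)%nat -> f i = g i) -> sum_upto n f = sum_upto n g.
Proof.
  induction n; intros H; simpl; auto. rewrite IHn by (intros; apply H; lia).
  rewrite H by lia. auto.
Qed.

Lemma Ct_sum n (F : nat -> R -> R) : (forall i, Ct (F i)) -> Ct (fun x => sum_upto n (fun i => F i x)).
Proof.
  intros H. induction n; simpl. apply Ct_const. apply Ct_plus; auto.
Qed.

Lemma RInt_sum n (F : nat -> R -> R) a b : (forall i, Ct (F i)) ->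
  RInt (fun x => sum_upto n (fun i => F i x)) a b = sum_upto n (fun i => RInt (F i) a b).
Proof.
  intros H. induction n; simpl.
  - rewrite RInt_const. change scal with Rmult. ring.
  - rewrite <- IHn. pose proof (RInt_plus (fun x => sum_upto n (fun i => F i x)) (F n) a b) as E.
    change plus with Rplus in E. apply E; apply exR; auto. apply Ct_sum; auto.
Qed.

Lemma sum_nonneg n f : (forall i, (i < n)%nat -> 0 <= f i) -> 0 <= sum_upto n f.
Proof. induction n; simpl; intros H. lra. pose proof (H n ltac:(lia)); pose proof (IHn (fun i Hi => H i ltac:(lia))); lra. Qed.

Lemma sum_le n f g : (forall i, (i < n)%nat -> f i <= g i) -> sum_upto n f <= sum_upto n g.
Proof. induction n; simpl; intros H. lra. pose proof (H n ltac:(lia)); pose proof (IHn (fun i Hi => H i ltac:(lia))); lra. Qed.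

Lemma sum_minus n f g : sum_upto n (fun i => f i - g i) = sum_upto n f - sum_upto n g.
Proof. induction n; simpl; auto. ring. rewrite IHn. ring. Qed.

Lemma sum_abs n f : Rabs (sum_upto n f) <= sum_upto n (fun i => Rabs (f i)).
Proof.
  induction n; simpl. rewrite Rabs_R0; lra.
  eapply Rle_trans; [apply Rabs_triang|]. lra.
Qed.

Lemma sum_sq_ge n f : (forall i, (i < n)%nat -> 0 <= f i) ->
  sum_upto n (fun i => f i ^ 2) <= (sum_upto n f) ^ 2.
Proof.
  induction n; simpl; intros H. lra.
  pose proof (IHn (fun i Hi => H i ltac:(lia))).
  pose proof (sum_nonneg n f (fun i Hi => H i ltac:(lia))). pose proof (H n ltac:(lia)). simpl in *. nra.
Qed.

Lemma sum_sq_eq n f : (forall i j, (i < n)%nat -> (j < n)%nat -> i <> j -> f i * f j = 0) ->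
  sum_upto n (fun i => f i ^ 2) = (sum_upto n f) ^ 2.
Proof.
  induction n; cbn [sum_upto]; intros H. lra.
  rewrite IHn by (intros; apply H; lia).
  assert (sum_upto n f * f n = 0).
  { assert (forall k, (k <= n)%nat -> sum_upto k f * f n = 0) as A.
    { induction k; simpl; intros. ring. rewrite Rmult_plus_distr_r, IHk by lia. rewrite H by lia. ring. }
    apply A; lia. }
  simpl in *. nra.
Qed.

Lemma Dw_lip2 x y : Rabs (Dw x - Dw y) <= 1 * Rabs (x - y).
Proof.
  pose proof (Dw_lip x y). pose proof (Dw_lip y x). rewrite Rabs_minus_sym in H0.
  apply Rabs_le. lra.
Qed.

Lemma G_lipg a m x y : Rabs (G a m x - G a m y) <= Rabs (m / a) * Rabs (x - y).
Proof.
  pose proof (Dw_lip2 x y) as H. rewrite Rmult_1_l in H.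
  assert (H2 : Rabs (m / a * Dw x - m / a * Dw y) <= Rabs (m / a) * Rabs (x - y)).
  { rewrite <- Rmult_minus_distr_l, Rabs_mult. apply Rmult_le_compat_l; auto. apply Rabs_pos. }
  unfold G. apply Rabs_le. apply Rabs_le_between in H2. unfold Rmax.
  destruct (Rle_dec 0 (m - m / a * Dw x)); destruct (Rle_dec 0 (m - m / a * Dw y)); split;
  pose proof (Rabs_pos (m / a)); pose proof (Rabs_pos (x - y)); nra.
Qed.

Lemma Ct_G a m : Ct (G a m).
Proof. apply (Ct_lip _ (Rabs (m / a))). apply Rabs_pos. apply G_lipg. Qed.

Lemma sum_scal n k f : sum_upto n (fun i => k * f i) = k * sum_upto n f.
Proof. induction n; simpl. ring. rewrite IHn. ring. Qed.

Lemma sum_const_mult n f t : sum_upto n (fun i => f i) * t = sum_upto n (fun i => f i * t).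
Proof. induction n; simpl. ring. rewrite <- IHn. ring. Qed.

Definition Gi (alpha psim : nat -> R) i x := G (alpha i) (psim i) x.
Definition Sc n alpha psim (c : nat -> R) x := sum_upto n (fun i => Gi alpha psim i (x - c i)).

Lemma Ct_Gi alpha psim i : Ct (Gi alpha psim i).
Proof. apply Ct_G. Qed.

Lemma Gi_per alpha psim i x : Gi alpha psim i (x + 2 * PI) = Gi alpha psim i x.
Proof. apply G_per. Qed.

Lemma Ct_Gs alpha psim i s : Ct (fun x => Gi alpha psim i (x - s)).
Proof. apply (Ct_comp (fun x => x - s)). apply Ct_minus. apply Ct_id. apply Ct_const. apply Ct_Gi. Qed.

Lemma Ct_Sc n alpha psim c : Ct (Sc n alpha psim c).
Proof. unfold Sc. apply (Ct_sum n (fun i x => Gi alpha psim i (x - c i))). intro; apply Ct_Gs. Qed.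

Lemma Sc_per n alpha psim c x : Sc n alpha psim c (x + 2 * PI) = Sc n alpha psim c x.
Proof.
  unfold Sc. apply sum_ext. intros i _. rewrite <- (Gi_per alpha psim i (x - c i)). f_equal. ring.
Qed.

Lemma Sc_lip n alpha psim c x y :
  Rabs (Sc n alpha psim c x - Sc n alpha psim c y) <=
  sum_upto n (fun i => Rabs (psim i / alpha i)) * Rabs (x - y).
Proof.
  unfold Sc. rewrite <- sum_minus. eapply Rle_trans; [apply sum_abs|].
  rewrite sum_const_mult. apply sum_le. intros i _. unfold Gi.
  replace (x - y) with ((x - c i) - (y - c i)) by ring. apply G_lipg.
Qed.

Lemma Sc_bounds n alpha psim c x :
  (forall i, (i < n)%nat -> 0 < alpha i) -> (forall i, (i < n)%nat -> 0 < psim i) ->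
  0 <= Sc n alpha psim c x <= sum_upto n psim.
Proof.
  intros Ha Hm. unfold Sc. split.
  - apply sum_nonneg. intros; apply G_nonneg.
  - apply sum_le. intros i Hi. apply G_le. auto. apply Rlt_le; auto.
Qed.

Definition Iq n alpha psim (mu : R -> R) om c tau :=
  RInt (fun th => (Sc n alpha psim c (th - om * tau) - mu th) ^ 2) (om * tau) (om * tau + 2 * PI).

Lemma mu_bound (mu : R -> R) : Ct mu -> exists M, forall x, 0 <= x <= 2 * PI -> mu x <= M.
Proof.
  intros Hc. destruct (continuity_ab_maj mu 0 (2 * PI)) as [xm [H _]].
  - pose proof PI_RGT_0; lra.
  - intros c _. apply continuity_pt_filterlim. apply Hc.
  - exists (mu xm). auto.
Qed.

Lemma Iq_cont n alpha psim mu om c :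
  (forall i, (i < n)%nat -> 0 < alpha i) -> (forall i, (i < n)%nat -> 0 < psim i) ->
  Ct mu -> (forall x, 0 <= mu x) -> (forall x, mu (x + 2 * PI) = mu x) -> 0 < om ->
  Ct (Iq n alpha psim mu om c).
Proof.
  intros Ha Hm Hc H0 Hp Hom.
  set (H := fun tau th => (Sc n alpha psim c (th - om * tau) - mu th) ^ 2).
  assert (HC : forall tau, Ct (H tau)).
  { intro tau. unfold H. apply Ct_pow. apply Ct_minus; auto.
    apply (Ct_comp (fun th => th - om * tau)). apply Ct_minus. apply Ct_id. apply Ct_const. apply Ct_Sc. }
  apply (Ct_ext (fun tau => RInt (H tau) 0 (2 * PI))).
  { intro tau. unfold Iq. symmetry. apply (RInt_per (H tau)). auto.
    intro x. unfold H. rewrite Hp. f_equal. f_equal.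
    replace (x + 2 * PI - om * tau) with ((x - om * tau) + 2 * PI) by ring. apply Sc_per. }
  destruct (mu_bound mu Hc) as [M HM].
  set (K := sum_upto n (fun i => Rabs (psim i / alpha i))).
  assert (HK : 0 <= K) by (apply sum_nonneg; intros; apply Rabs_pos).
  set (Ms := sum_upto n psim).
  intro t0. apply (param_lip H 0 (2 * PI) (K * om * (2 * Ms + 2 * M))).
  - pose proof PI_RGT_0; lra.
  - assert (0 <= Ms) by (apply sum_nonneg; intros; apply Rlt_le; auto).
    assert (0 <= M) by (pose proof (H0 0); pose proof PI_RGT_0 as HP; specialize (HM 0 ltac:(lra)); lra).
    apply Rmult_le_pos; [apply Rmult_le_pos|]; lra.
  - intro t; apply exR; auto.
  - intros t u Hu. unfold H.
    set (S1 := Sc n alpha psim c (u - om * t)). set (S2 := Sc n alpha psim c (u - om * t0)).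
    replace ((S1 - mu u) ^ 2 - (S2 - mu u) ^ 2) with ((S1 - S2) * (S1 + S2 - 2 * mu u)) by ring.
    rewrite Rabs_mult.
    assert (E1 : Rabs (S1 - S2) <= K * om * Rabs (t - t0)).
    { unfold S1, S2. eapply Rle_trans; [apply Sc_lip|]. fold K.
      replace (u - om * t - (u - om * t0)) with (om * (t0 - t)) by ring.
      rewrite Rabs_mult, Rabs_right by lra. rewrite Rabs_minus_sym. lra. }
    assert (E2 : Rabs (S1 + S2 - 2 * mu u) <= 2 * Ms + 2 * M).
    { pose proof (Sc_bounds n alpha psim c (u - om * t) Ha Hm).
      pose proof (Sc_bounds n alpha psim c (u - om * t0) Ha Hm).
      pose proof (HM u Hu). pose proof (H0 u). fold S1 S2 Ms in H1, H2.
      apply Rabs_le. lra. }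
    replace (K * om * (2 * Ms + 2 * M) * Rabs (t - t0)) with ((K * om * Rabs (t - t0)) * (2 * Ms + 2 * M)) by ring.
    apply Rmult_le_compat; auto; apply Rabs_pos.
Qed.

Definition Fi alpha psim (mu : R -> R) i s :=
  RInt (fun th => mu th * Gi alpha psim i (th - s)) 0 (2 * PI).
Definition Ai alpha psim i := RInt (fun u => Gi alpha psim i u ^ 2) 0 (2 * PI).
Definition Bm (mu : R -> R) := RInt (fun u => mu u ^ 2) 0 (2 * PI).
Definition Lam n alpha psim mu om (c : nat -> R) tau :=
  sum_upto n (fun i => Ai alpha psim i - 2 * Fi alpha psim mu i (c i + om * tau)) + Bm mu.
Definition Lint n alpha psim mu om (c : nat -> R) tau th :=
  sum_upto n (fun i => Gi alpha psim i (th - om * tau - c i) ^ 2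
                       - 2 * (mu th * Gi alpha psim i (th - om * tau - c i))) + mu th ^ 2.

Lemma Ct_Lint n alpha psim mu om c tau : Ct mu -> Ct (Lint n alpha psim mu om c tau).
Proof.
  intros Hc. unfold Lint. apply Ct_plus; [|apply Ct_pow; auto].
  apply (Ct_sum n (fun i th => Gi alpha psim i (th - om * tau - c i) ^ 2
                       - 2 * (mu th * Gi alpha psim i (th - om * tau - c i)))).
  intro i. assert (Ct (fun th => Gi alpha psim i (th - om * tau - c i))).
  { apply (Ct_ext (fun th => Gi alpha psim i (th - (om * tau + c i)))).
    intro; f_equal; ring. apply Ct_Gs. }
  apply Ct_minus. apply Ct_pow; auto. apply Ct_mult. apply Ct_const. apply Ct_mult; auto.
Qed.

Lemma RInt_Lint n alpha psim mu om c tau : Ct mu -> (forall x, mu (x + 2 * PI) = mu x) ->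
  RInt (Lint n alpha psim mu om c tau) (om * tau) (om * tau + 2 * PI) = Lam n alpha psim mu om c tau.
Proof.
  intros Hc Hp. unfold Lint, Lam.
  set (g := fun i th => Gi alpha psim i (th - (c i + om * tau))).
  assert (Hg : forall i, Ct (g i)) by (intro; apply Ct_Gs).
  transitivity (RInt (fun th => sum_upto n (fun i => g i th ^ 2 - 2 * (mu th * g i th)) + mu th ^ 2) (om * tau) (om * tau + 2 * PI)).
  { apply RInt_ext. intros x _. f_equal. apply sum_ext. intros i _. unfold g.
    replace (x - om * tau - c i) with (x - (c i + om * tau)) by ring. reflexivity. }
  assert (Hs : Ct (fun th => sum_upto n (fun i => g i th ^ 2 - 2 * (mu th * g i th)))).
  { apply (Ct_sum n (fun i th => g i th ^ 2 - 2 * (mu th * g i th))). intro i.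
    apply Ct_minus. apply Ct_pow; auto. apply Ct_mult. apply Ct_const. apply Ct_mult; auto. }
  pose proof (RInt_plus (V := R_CompleteNormedModule) _ _ (om * tau) (om * tau + 2 * PI) (exR _ _ _ Hs) (exR _ _ _ (Ct_pow mu 2 Hc))) as E.
  change plus with Rplus in E. simpl in E |- *. rewrite E. clear E.
  f_equal.
  - rewrite (RInt_sum n (fun i th => g i th ^ 2 - 2 * (mu th * g i th))).
    2:{ intro i. apply Ct_minus. apply Ct_pow; auto. apply Ct_mult. apply Ct_const. apply Ct_mult; auto. }
    apply sum_ext. intros i _.
    assert (H1 : Ct (fun th => g i th ^ 2)) by (apply Ct_pow; auto).
    assert (H2 : Ct (fun th => mu th * g i th)) by (apply Ct_mult; auto).
    pose proof (RInt_scal (V := R_CompleteNormedModule) _ (om * tau) (om * tau + 2 * PI) 2 (exR _ _ _ H2)) as E2.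
    pose proof (RInt_minus (V := R_CompleteNormedModule) (fun th => g i th ^ 2) (fun th => scal 2 (mu th * g i th)) (om * tau) (om * tau + 2 * PI) (exR _ _ _ H1)) as E1.
    change scal with Rmult in E1, E2. change minus with Rminus in E1.
    rewrite E1, E2. clear E1 E2. f_equal.
    + unfold g, Ai. apply (RInt_per_shift (fun u => Gi alpha psim i u ^ 2)).
      apply Ct_pow, Ct_Gi. intro x; rewrite Gi_per; auto.
    + f_equal. unfold Fi. apply RInt_per. auto. intro x. rewrite Hp. f_equal. unfold g.
      replace (x + 2 * PI - (c i + om * tau)) with ((x - (c i + om * tau)) + 2 * PI) by ring.
      apply Gi_per.
    + apply (ex_RInt_scal (V := R_NormedModule)). apply exR; auto.
  - unfold Bm. apply (RInt_per (fun u => mu u ^ 2)). apply Ct_pow; auto.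
    intro x; rewrite Hp; auto.
Qed.

Lemma Lint_eq n alpha psim mu om c tau th :
  Lint n alpha psim mu om c tau th =
  sum_upto n (fun i => Gi alpha psim i (th - om * tau - c i) ^ 2)
  - 2 * mu th * Sc n alpha psim c (th - om * tau) + mu th ^ 2.
Proof.
  unfold Lint, Sc. rewrite sum_minus.
  rewrite (sum_scal n 2 (fun i => mu th * Gi alpha psim i (th - om * tau - c i))).
  rewrite (sum_scal n (mu th) (fun i => Gi alpha psim i (th - om * tau - c i))).
  ring.
Qed.

Lemma Iq_ge n alpha psim mu om c tau : Ct mu -> (forall x, mu (x + 2 * PI) = mu x) ->
  Lam n alpha psim mu om c tau <= Iq n alpha psim mu om c tau.
Proof.
  intros Hc Hp. rewrite <- RInt_Lint by auto. unfold Iq.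
  apply RInt_le.
  - pose proof PI_RGT_0; lra.
  - apply exR, Ct_Lint; auto.
  - apply exR. apply Ct_pow. apply Ct_minus; auto.
    apply (Ct_comp (fun th => th - om * tau)). apply Ct_minus. apply Ct_id. apply Ct_const. apply Ct_Sc.
  - intros x _. rewrite Lint_eq.
    pose proof (sum_sq_ge n (fun i => Gi alpha psim i (x - om * tau - c i)) (fun i _ => G_nonneg _ _ _)).
    unfold Sc in *. nra.
Qed.

Lemma Iq_eq n alpha psim mu om c tau : Ct mu -> (forall x, mu (x + 2 * PI) = mu x) ->
  (forall i j, (i < n)%nat -> (j < n)%nat -> i <> j -> forall x,
     Gi alpha psim i (x - c i) * Gi alpha psim j (x - c j) = 0) ->
  Lam n alpha psim mu om c tau = Iq n alpha psim mu om c tau.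
Proof.
  intros Hc Hp Hno. rewrite <- RInt_Lint by auto. unfold Iq.
  apply RInt_ext. intros x _. rewrite Lint_eq.
  rewrite (sum_sq_eq n (fun i => Gi alpha psim i (x - om * tau - c i))).
  - unfold Sc. match goal with |- ?a = ?b => change (@eq R a b) end. ring.
  - intros i j Hi Hj Hij. replace (x - om * tau - c i) with ((x - om * tau) - c i) by ring. apply Hno; auto.
Qed.

Lemma Fi_per alpha psim mu i s : Fi alpha psim mu i (s + 2 * PI) = Fi alpha psim mu i s.
Proof.
  unfold Fi. apply RInt_ext. intros x _. f_equal.
  rewrite <- (Gi_per alpha psim i (x - (s + 2 * PI))). f_equal. ring.
Qed.

Lemma Fi_cont alpha psim mu i : Ct mu -> (forall x, 0 <= mu x) -> Ct (Fi alpha psim mu i).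
Proof.
  intros Hc H0. destruct (mu_bound mu Hc) as [M HM].
  assert (0 <= M) by (pose proof (H0 0); pose proof PI_RGT_0 as HP; specialize (HM 0 ltac:(lra)); lra).
  intro s0. unfold Fi.
  apply (param_lip (fun s th => mu th * Gi alpha psim i (th - s)) 0 (2 * PI) (M * Rabs (psim i / alpha i))).
  - pose proof PI_RGT_0; lra.
  - apply Rmult_le_pos; auto. apply Rabs_pos.
  - intro t. apply exR. apply Ct_mult; auto. apply Ct_Gs.
  - intros t u Hu. rewrite <- Rmult_minus_distr_l, Rabs_mult, Rmult_assoc.
    rewrite (Rabs_right (mu u)) by (apply Rle_ge; auto).
    apply Rmult_le_compat; auto. apply Rabs_pos.
    unfold Gi. eapply Rle_trans; [apply G_lipg|].
    replace (u - t - (u - s0)) with (-(t - s0)) by ring. rewrite Rabs_Ropp. lra.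
Qed.

Lemma RInt_Fi_lin alpha psim mu i om c : Ct mu -> (forall x, 0 <= mu x) -> 0 < om ->
  RInt (fun tau => Fi alpha psim mu i (c + om * tau)) 0 (2 * PI / om)
  = / om * RInt (Fi alpha psim mu i) 0 (2 * PI).
Proof.
  intros Hc H0 Hom. pose proof (Fi_cont alpha psim mu i Hc H0) as HF.
  assert (E : RInt (fun y : R => scal om (Fi alpha psim mu i (om * y + c))) 0 (2 * PI / om)
     = RInt (Fi alpha psim mu i) (om * 0 + c) (om * (2 * PI / om) + c))
    by (apply RInt_comp_lin; apply exR; auto).
  replace (om * 0 + c) with c in E by ring.
  replace (om * (2 * PI / om) + c) with (c + 2 * PI) in E by (field; lra).
  rewrite (RInt_per (Fi alpha psim mu i) c HF (Fi_per alpha psim mu i)) in E.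
  assert (HC2 : Ct (fun tau => Fi alpha psim mu i (c + om * tau))).
  { apply (Ct_comp (fun tau => c + om * tau)); auto. apply Ct_plus. apply Ct_const. apply Ct_mult. apply Ct_const. apply Ct_id. }
  pose proof (RInt_scal (V := R_CompleteNormedModule) _ 0 (2 * PI / om) om (exR _ _ _ HC2)) as E2.
  assert (E3 : RInt (fun y : R => scal om (Fi alpha psim mu i (om * y + c))) 0 (2 * PI / om) =
     RInt (fun x : R => scal om (Fi alpha psim mu i (c + om * x))) 0 (2 * PI / om)).
  { apply RInt_ext. intros x _. f_equal. f_equal. ring. }
  rewrite E3, E2 in E. change scal with Rmult in E.
  rewrite <- E. rewrite <- Rmult_assoc, Rinv_l, Rmult_1_l by lra. reflexivity.
Qed.

Lemma Ct_Lam n alpha psim mu om c : Ct mu -> (forall x, 0 <= mu x) ->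
  Ct (fun tau => sum_upto n (fun i => Ai alpha psim i - 2 * Fi alpha psim mu i (c i + om * tau))).
Proof.
  intros Hc H0. apply (Ct_sum n (fun i tau => Ai alpha psim i - 2 * Fi alpha psim mu i (c i + om * tau))).
  intro i. apply Ct_minus. apply Ct_const. apply Ct_mult. apply Ct_const.
  apply (Ct_comp (fun tau => c i + om * tau)). apply Ct_plus. apply Ct_const. apply Ct_mult. apply Ct_const. apply Ct_id.
  apply Fi_cont; auto.
Qed.

Lemma RInt_Lam n alpha psim mu om c : Ct mu -> (forall x, 0 <= mu x) -> 0 < om ->
  RInt (Lam n alpha psim mu om c) 0 (2 * PI / om) =
  sum_upto n (fun i => (2 * PI / om) * Ai alpha psim i - 2 * (/ om * RInt (Fi alpha psim mu i) 0 (2 * PI)))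
  + (2 * PI / om) * Bm mu.
Proof.
  intros Hc H0 Hom. unfold Lam.
  pose proof (RInt_plus (V := R_CompleteNormedModule) _ (fun _ => Bm mu) 0 (2 * PI / om) (exR _ _ _ (Ct_Lam n alpha psim mu om c Hc H0)) (exR _ _ _ (Ct_const (Bm mu)))) as E.
  change plus with Rplus in E. simpl in E. rewrite E. clear E.
  rewrite RInt_const. change scal with Rmult. rewrite Rminus_0_r. f_equal.
  rewrite (RInt_sum n (fun i tau => Ai alpha psim i - 2 * Fi alpha psim mu i (c i + om * tau))).
  2:{ intro i. apply Ct_minus. apply Ct_const. apply Ct_mult. apply Ct_const.
      apply (Ct_comp (fun tau => c i + om * tau)). apply Ct_plus. apply Ct_const. apply Ct_mult. apply Ct_const. apply Ct_id.
      apply Fi_cont; auto. }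
  apply sum_ext. intros i _.
  assert (HC2 : Ct (fun tau => Fi alpha psim mu i (c i + om * tau))).
  { apply (Ct_comp (fun tau => c i + om * tau)). apply Ct_plus. apply Ct_const. apply Ct_mult. apply Ct_const. apply Ct_id.
    apply Fi_cont; auto. }
  pose proof (RInt_scal (V := R_CompleteNormedModule) _ 0 (2 * PI / om) 2 (exR _ _ _ HC2)) as E2.
  pose proof (RInt_minus (V := R_CompleteNormedModule) (fun _ => Ai alpha psim i) (fun tau => scal 2 (Fi alpha psim mu i (c i + om * tau))) 0 (2 * PI / om) (exR _ _ _ (Ct_const _))) as E1.
  change scal with Rmult in E1, E2. change minus with Rminus in E1.
  rewrite E1, E2. clear E1 E2. rewrite RInt_const. change scal with Rmult. rewrite Rminus_0_r.
  rewrite RInt_Fi_lin; auto.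
  apply (ex_RInt_scal (V := R_NormedModule)). apply exR; auto.
Qed.

Definition cof rs (phi0 : nat -> R) (q : nat -> R * R) i := phi0 i + dphi rs (q i).

Lemma Jpot_eq n rs om phi0 alpha psim mu q :
  (forall i, (i < n)%nat -> 0 < alpha i < PI) -> (forall i, (i < n)%nat -> 0 < psim i) ->
  Jpot n rs om phi0 alpha psim mu q =
  / (2 * (2 * PI / om)) * RInt (Iq n alpha psim mu om (cof rs phi0 q)) 0 (2 * PI / om).
Proof.
  intros Ha Hm. unfold Jpot. cbv zeta. f_equal. apply RInt_ext. intros tau _.
  unfold Iq. apply RInt_ext. intros th _. f_equal. f_equal.
  unfold rho, Sc. apply sum_ext. intros i Hi.
  rewrite psi_G by (try apply Hm; try apply Ha; auto).
  unfold Gi, phi, cof. f_equal. ring.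
Qed.

Theorem proposition6
  (n : nat) (rs om pm : R) (phi0 alpha psim : nat -> R) (mu : R -> R)
  (Hn : (3 <= n)%nat) (Hrs : 0 < rs) (Hom : 0 < om) (Hpm : 0 < pm < rs)
  (Hphi0_0 : phi0 0%nat = 0)
  (Hphi0_inc : forall i, (S i < n)%nat -> phi0 i < phi0 (S i))
  (Hphi0_last : phi0 (pred n) < 2 * PI)
  (Halpha : forall i, (i < n)%nat -> 0 < alpha i < PI)
  (Hpsim : forall i, (i < n)%nat -> 0 < psim i)
  (Hmu_cont : forall x, continuous mu x)
  (Hmu_nonneg : forall x, 0 <= mu x)
  (Hmu_per : forall x, mu (x + 2 * PI) = mu x)
  (* the distributed projected gradient iteration and its limit p* *)
  (s : nat -> R) (pk : nat -> nat -> R * R) (pstar : nat -> R * R)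
  (Hiter : forall k i, (i < n)%nat ->
     is_proj_Omega rs pm
       (fst (pk k i) - s k * dJ_x (Jpot n rs om phi0 alpha psim mu) (pk k) i,
        snd (pk k i) - s k * dJ_y (Jpot n rs om phi0 alpha psim mu) (pk k) i)
       (pk (S k) i))
  (Hlim : forall i, (i < n)%nat ->
     is_lim_seq (fun k => fst (pk k i)) (fst (pstar i)) /\
     is_lim_seq (fun k => snd (pk k i)) (snd (pstar i)))
  (Hint : forall i, (i < n)%nat -> in_int_Omega rs pm (pstar i))
  (Hstat : forall i, (i < n)%nat ->
     is_derive (fun t => Jpot n rs om phi0 alpha psim mu
                           (upd pstar i (t, snd (pstar i)))) (fst (pstar i)) 0 /\
     is_derive (fun t => Jpot n rs om phi0 alpha psim mu
                           (upd pstar i (fst (pstar i), t))) (snd (pstar i)) 0)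
  (* no two coverage regions overlap at p* *)
  (Hnonoverlap : forall i j, (i < n)%nat -> (j < n)%nat -> i <> j ->
     forall tau th,
       ~ (in_C (alpha i) (phi rs om (phi0 i) (pstar i) tau) th /\
          in_C (alpha j) (phi rs om (phi0 j) (pstar j) tau) th)) :
  (* p* is a local minimum of J over Omega *)
  exists eps, 0 < eps /\
    forall q : nat -> R * R,
      (forall i, (i < n)%nat -> in_Omega rs pm (q i)) ->
      (forall i, (i < n)%nat ->
         norm2 (fst (q i) - fst (pstar i), snd (q i) - snd (pstar i)) < eps) ->
      Jpot n rs om phi0 alpha psim mu pstar <= Jpot n rs om phi0 alpha psim mu q.
Proof.
  assert (Ha : forall i, (i < n)%nat -> 0 < alpha i) by (intros i Hi; apply Halpha; auto).
  assert (Hc : Ct mu) by exact Hmu_cont.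
  assert (HT : 0 < 2 * PI / om) by (pose proof PI_RGT_0; apply Rdiv_lt_0_compat; lra).
  assert (HT2 : 0 < / (2 * (2 * PI / om))) by (apply Rinv_0_lt_compat; lra).
  set (cs := cof rs phi0 pstar).
  assert (Hno : forall i j, (i < n)%nat -> (j < n)%nat -> i <> j -> forall x,
     Gi alpha psim i (x - cs i) * Gi alpha psim j (x - cs j) = 0).
  { intros i j Hi Hj Hij x.
    destruct (Req_dec (Gi alpha psim i (x - cs i)) 0) as [E|E]; [rewrite E; ring|].
    destruct (Req_dec (Gi alpha psim j (x - cs j)) 0) as [E'|E']; [rewrite E'; ring|].
    exfalso. apply (Hnonoverlap i j Hi Hj Hij 0 x). split.
    - apply (psi_inC _ (psim i)). rewrite psi_G by auto. unfold phi. unfold Gi, cs, cof in E.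
      replace (x - (phi0 i + dphi rs (pstar i) + om * 0)) with (x - (phi0 i + dphi rs (pstar i))) by ring. exact E.
    - apply (psi_inC _ (psim j)). rewrite psi_G by auto. unfold phi. unfold Gi, cs, cof in E'.
      replace (x - (phi0 j + dphi rs (pstar j) + om * 0)) with (x - (phi0 j + dphi rs (pstar j))) by ring. exact E'. }
  exists 1. split; [lra|]. intros q _ _.
  rewrite !Jpot_eq by auto.
  apply Rmult_le_compat_l; [lra|].
  transitivity (RInt (Lam n alpha psim mu om cs) 0 (2 * PI / om)).
  - right. apply RInt_ext. intros x _. symmetry. apply Iq_eq; auto.
  - rewrite RInt_Lam by auto. rewrite <- (RInt_Lam n alpha psim mu om (cof rs phi0 q)) by auto.
    apply RInt_le; [lra| | |].
    + apply exR. unfold Lam. apply Ct_plus. apply Ct_Lam; auto. apply Ct_const.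
    + apply exR. apply Iq_cont; auto.
    + intros x _. apply Iq_ge; auto.
Qed.
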